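(* Let $\delta_0=(\mathbf a_1,\mathbf a_2,\mathbf a_3)$ be an m-triangle of maximal area among m-triangles with the same moment of inertia, and let $\delta_1,\delta_2$ be degenerate (collinear) but nonzero m-triangles satisfying $\delta_0\times\delta_1=\delta_0\times\delta_2=0$. Then the angle $\psi$ between the lines spanned by $\delta_1$ and $\delta_2$ equals the distance between their shapes $\delta_1^\ast,\delta_2^\ast$ in the shape space $M^\ast\simeq S^2(1/2)$, namely $\psi=\frac12|\theta_2-\theta_1|$, where $\theta_i$ is the longitude of $\delta_i^\ast$ on the equator.
   Context: Masses $m_1,m_2,m_3>0$, $m_1+m_2+m_3=1$; an m-triangle is $(\mathbf a_1,\mathbf a_2,\mathbf a_3)$, $\mathbf a_i\in\mathbb R^3$, $\sum m_i\mathbf a_i=0$, with moment of inertia $I=\sum m_i|\mathbf a_i|^2$. For m-triangles $\mathbf X=(\mathbf a_i)$, $\mathbf Y=(\mathbf b_i)$, $\mathbf X\times\mathbf Y=\sum m_i\mathbf a_i\times\mathbf b_i$ (this vanishing is the zero angular momentum condition for the linear motion from $\mathbf X$ to $\mathbf Y$). The shape space $M^\ast$ consists of oriented m-triangles with $I=1$ modulo rotation; with the kinematic metric (induced from $\sum m_i|d\mathbf a_i|^2$ by zero angular momentum lifts) it is a round sphere of radius $1/2$ whose equator is the set of collinear shapes; $\theta$ is the longitude on it, and the spherical metric is $\frac14(d\varphi^2+\sin^2\varphi\,d\theta^2)$. The shape of a nonzero m-triangle is the shape of its rescaling to $I=1$. *)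

(* Defs.v *)
From Stdlib Require Import Reals Lra.
Open Scope R_scope.

Record V3 := mkV3 { vx : R; vy : R; vz : R }.

Definition vadd (u v : V3) : V3 := mkV3 (vx u + vx v) (vy u + vy v) (vz u + vz v).
Definition vscale (c : R) (u : V3) : V3 := mkV3 (c * vx u) (c * vy u) (c * vz u).
Definition vsub (u v : V3) : V3 := vadd u (vscale (-1) v).
Definition vzero : V3 := mkV3 0 0 0.
Definition vdot (u v : V3) : R := vx u * vx v + vy u * vy v + vz u * vz v.
Definition vcross (u v : V3) : V3 :=
  mkV3 (vy u * vz v - vz u * vy v)
       (vz u * vx v - vx u * vz v)
       (vx u * vy v - vy u * vx v).
Definition vnorm (u : V3) : R := sqrt (vdot u u).

Definition masses_ok (m1 m2 m3 : R) : Prop :=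
  0 < m1 /\ 0 < m2 /\ 0 < m3 /\ m1 + m2 + m3 = 1.

Definition tri := (V3 * V3 * V3)%type.
Definition p1 (X : tri) : V3 := fst (fst X).
Definition p2 (X : tri) : V3 := snd (fst X).
Definition p3 (X : tri) : V3 := snd X.

Definition is_mtri (m1 m2 m3 : R) (X : tri) : Prop :=
  vadd (vadd (vscale m1 (p1 X)) (vscale m2 (p2 X))) (vscale m3 (p3 X)) = vzero.

Definition inertia (m1 m2 m3 : R) (X : tri) : R :=
  m1 * vdot (p1 X) (p1 X) + m2 * vdot (p2 X) (p2 X) + m3 * vdot (p3 X) (p3 X).

(** X x Y = sum m_i a_i x b_i (angular momentum of the linear motion X -> Y). *)
Definition mcross (m1 m2 m3 : R) (X Y : tri) : V3 :=
  vadd (vadd (vscale m1 (vcross (p1 X) (p1 Y)))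
             (vscale m2 (vcross (p2 X) (p2 Y))))
       (vscale m3 (vcross (p3 X) (p3 Y))).

Definition area (X : tri) : R :=
  / 2 * vnorm (vcross (vsub (p2 X) (p1 X)) (vsub (p3 X) (p1 X))).

Definition max_area (m1 m2 m3 : R) (X : tri) : Prop :=
  forall Y : tri, is_mtri m1 m2 m3 Y ->
    inertia m1 m2 m3 Y = inertia m1 m2 m3 X -> area Y <= area X.

(** The triangle is degenerate and lies on the line R u (through the
    origin = its center of mass). *)
Definition on_line (u : V3) (X : tri) : Prop :=
  exists t1 t2 t3 : R,
    p1 X = vscale t1 u /\ p2 X = vscale t2 u /\ p3 X = vscale t3 u.

Definition collinear (X : tri) : Prop := exists u : V3, u <> vzero /\ on_line u X.

Definition nonzero_tri (X : tri) : Prop := X <> (vzero, vzero, vzero).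

Definition line_angle (u v : V3) : R :=
  acos (Rabs (vdot u v) / (vnorm u * vnorm v)).

(** Jacobi coordinates (isometric for the kinematic metric):
    xi1 = sqrt(m1 m2/(m1+m2)) (a2 - a1),
    xi2 = sqrt(m3 (m1+m2)) (a3 - (m1 a1 + m2 a2)/(m1+m2)),
    so that I = |xi1|^2 + |xi2|^2. *)
Definition jac1 (m1 m2 m3 : R) (X : tri) : V3 :=
  vscale (sqrt (m1 * m2 / (m1 + m2))) (vsub (p2 X) (p1 X)).
Definition jac2 (m1 m2 m3 : R) (X : tri) : V3 :=
  vscale (sqrt (m3 * (m1 + m2)))
    (vsub (p3 X) (vscale (/ (m1 + m2)) (vadd (vscale m1 (p1 X)) (vscale m2 (p2 X))))).

(** Shape of a nonzero m-triangle, as a point of the unit sphere S^2 in R^3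
    (Hopf coordinates, invariant under rotations and rescaling):
      ( |xi1|^2 - |xi2|^2, 2 xi1.xi2, 2 |xi1 x xi2| ) / I.
    The shape space M* with the kinematic metric is this sphere scaled by
    1/2, i.e. S^2(1/2); the equator (third coordinate 0) is the set of
    collinear shapes. *)
Definition shape (m1 m2 m3 : R) (X : tri) : V3 :=
  let x := jac1 m1 m2 m3 X in
  let y := jac2 m1 m2 m3 X in
  vscale (/ inertia m1 m2 m3 X)
    (mkV3 (vdot x x - vdot y y) (2 * vdot x y) (2 * vnorm (vcross x y))).

Definition shape_dist (m1 m2 m3 : R) (X Y : tri) : R :=
  / 2 * acos (vdot (shape m1 m2 m3 X) (shape m1 m2 m3 Y)).

Definition longitude (m1 m2 m3 : R) (X : tri) (theta : R) : Prop :=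
  let s := shape m1 m2 m3 X in
  exists phi : R, 0 <= phi <= PI /\
    s = mkV3 (sin phi * cos theta) (sin phi * sin theta) (cos phi).

(* Main.v *)
Require Import Defs.
From Stdlib Require Import Reals Lra Lia ZArith.
Open Scope R_scope.

Lemma core (m1 m2 m3 c1 c2 x1 x2 x3 y1 y2 y3 : R) : 0<m1 -> 0<m2 -> 0<m3 -> m1+m2+m3=1 ->
  c1*c1 = m1*m2/(m1+m2) -> c2*c2 = m3*(m1+m2) -> m1*x1+m2*x2+m3*x3 = 0 -> m1*y1+m2*y2+m3*y3=0 ->
 m1*(x1*y1)+m2*(x2*y2)+m3*(x3*y3) = (c1*(x2 + -1*x1))*(c1*(y2 + -1*y1)) + (c2*(x3 + -1*(/(m1+m2)*(m1*x1+m2*x2))))*(c2*(y3 + -1*(/(m1+m2)*(m1*y1+m2*y2)))).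
Proof.
  intros H1 H2 H3 Hs Hc1 Hc2 Hx Hy.
  replace ((c1*(x2 + -1*x1))*(c1*(y2 + -1*y1)) + (c2*(x3 + -1*(/(m1+m2)*(m1*x1+m2*x2))))*(c2*(y3 + -1*(/(m1+m2)*(m1*y1+m2*y2)))))
   with ((c1*c1)*((x2 + -1*x1)*(y2 + -1*y1)) + (c2*c2)*((x3 + -1*(/(m1+m2)*(m1*x1+m2*x2)))*(y3 + -1*(/(m1+m2)*(m1*y1+m2*y2))))) by ring.
  rewrite Hc1, Hc2.
  assert (Ex : x3 = -(m1*x1+m2*x2)/m3) by (apply (Rmult_eq_reg_l m3); [field_simplify; lra | lra]).
  assert (Ey : y3 = -(m1*y1+m2*y2)/m3) by (apply (Rmult_eq_reg_l m3); [field_simplify; lra | lra]).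
  assert (Em : m3 = 1 - m1 - m2) by lra.
  subst x3 y3. rewrite Em. field. split; lra.
Qed.

Lemma test (a b c d : R) : a*b + c = d -> c = d - b*a.
Proof. intros; lra. Qed.

Lemma sq_c1 m1 m2 m3 : masses_ok m1 m2 m3 -> sqrt (m1*m2/(m1+m2)) * sqrt (m1*m2/(m1+m2)) = m1*m2/(m1+m2).
Proof. intros (H1&H2&H3&H4). apply sqrt_sqrt. apply Rlt_le, Rdiv_lt_0_compat; nra. Qed.
Lemma sq_c2 m1 m2 m3 : masses_ok m1 m2 m3 -> sqrt (m3*(m1+m2)) * sqrt (m3*(m1+m2)) = m3*(m1+m2).
Proof. intros (H1&H2&H3&H4). apply sqrt_sqrt. nra. Qed.

Ltac destr_tri X := let a := fresh "a" in let b := fresh "b" in let c := fresh "c" in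
  destruct X as [[a b] c]; destruct a, b, c.

Ltac mtri_eqs H := unfold is_mtri, p1, p2, p3, vadd, vscale, vzero in H; simpl in H;
  injection H; clear H; intros.

Lemma jac_cross m1 m2 m3 X Y : masses_ok m1 m2 m3 -> is_mtri m1 m2 m3 X -> is_mtri m1 m2 m3 Y ->
  mcross m1 m2 m3 X Y = vadd (vcross (jac1 m1 m2 m3 X) (jac1 m1 m2 m3 Y)) (vcross (jac2 m1 m2 m3 X) (jac2 m1 m2 m3 Y)).
Proof.
  intros hm hX hY. pose proof (sq_c1 _ _ _ hm) as C1. pose proof (sq_c2 _ _ _ hm) as C2.
  destruct hm as (H1&H2&H3&H4).
  destr_tri X; destr_tri Y. mtri_eqs hX. mtri_eqs hY.
  unfold mcross, jac1, jac2, vcross, vadd, vscale, vsub, p1, p2, p3; simpl.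
  set (c1 := sqrt (m1*m2/(m1+m2))) in *. set (c2 := sqrt (m3*(m1+m2))) in *.
  f_equal.
  - pose proof (core _ _ _ c1 c2 _ _ _ _ _ _ H1 H2 H3 H4 C1 C2 H0 H6).
    pose proof (core _ _ _ c1 c2 _ _ _ _ _ _ H1 H2 H3 H4 C1 C2 H H7). lra.
  - pose proof (core _ _ _ c1 c2 _ _ _ _ _ _ H1 H2 H3 H4 C1 C2 H H8).
    pose proof (core _ _ _ c1 c2 _ _ _ _ _ _ H1 H2 H3 H4 C1 C2 H5 H6). lra.
  - pose proof (core _ _ _ c1 c2 _ _ _ _ _ _ H1 H2 H3 H4 C1 C2 H5 H7).
    pose proof (core _ _ _ c1 c2 _ _ _ _ _ _ H1 H2 H3 H4 C1 C2 H0 H8). lra.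
Qed.

Lemma jac_inertia m1 m2 m3 X : masses_ok m1 m2 m3 -> is_mtri m1 m2 m3 X ->
  inertia m1 m2 m3 X = vdot (jac1 m1 m2 m3 X) (jac1 m1 m2 m3 X) + vdot (jac2 m1 m2 m3 X) (jac2 m1 m2 m3 X).
Proof.
  intros hm hX. pose proof (sq_c1 _ _ _ hm) as C1. pose proof (sq_c2 _ _ _ hm) as C2.
  destruct hm as (H1&H2&H3&H4).
  destr_tri X. mtri_eqs hX.
  unfold inertia, jac1, jac2, vdot, vadd, vscale, vsub, p1, p2, p3; simpl.
  set (c1 := sqrt (m1*m2/(m1+m2))) in *. set (c2 := sqrt (m3*(m1+m2))) in *.
  pose proof (core _ _ _ c1 c2 _ _ _ _ _ _ H1 H2 H3 H4 C1 C2 H H).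
  pose proof (core _ _ _ c1 c2 _ _ _ _ _ _ H1 H2 H3 H4 C1 C2 H0 H0).
  pose proof (core _ _ _ c1 c2 _ _ _ _ _ _ H1 H2 H3 H4 C1 C2 H5 H5). lra.
Qed.

Definition Kx (X : tri) := vcross (vsub (p2 X) (p1 X)) (vsub (p3 X) (p1 X)).

Lemma vdot_self_ge0 u : 0 <= vdot u u.
Proof. destruct u; unfold vdot; simpl; nra. Qed.

Lemma area_sq X : area X * area X = /4 * vdot (Kx X) (Kx X).
Proof.
  unfold area, vnorm. fold (Kx X).
  pose proof (sqrt_sqrt _ (vdot_self_ge0 (Kx X))). nra.
Qed.

Lemma area_ge0 X : 0 <= area X.
Proof. unfold area, vnorm. pose proof (sqrt_pos (vdot (Kx X) (Kx X))). unfold Kx in *. nra. Qed.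

Lemma lagrange u v : vdot (vcross u v) (vcross u v) = vdot u u * vdot v v - vdot u v * vdot u v.
Proof. destruct u, v; unfold vdot, vcross; simpl; ring. Qed.

Lemma cross_jac_sq m1 m2 m3 X : masses_ok m1 m2 m3 ->
  vdot (vcross (jac1 m1 m2 m3 X) (jac2 m1 m2 m3 X)) (vcross (jac1 m1 m2 m3 X) (jac2 m1 m2 m3 X))
  = m1*m2*m3 * vdot (Kx X) (Kx X).
Proof.
  intros hm. pose proof (sq_c1 _ _ _ hm) as C1. pose proof (sq_c2 _ _ _ hm) as C2.
  destruct hm as (H1&H2&H3&H4).
  assert (E: vcross (jac1 m1 m2 m3 X) (jac2 m1 m2 m3 X) =
     vscale (sqrt (m1*m2/(m1+m2)) * sqrt (m3*(m1+m2))) (Kx X)).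
  { destr_tri X. unfold Kx, jac1, jac2, vcross, vscale, vsub, vadd, p1, p2, p3; simpl.
    f_equal; field; lra. }
  rewrite E. set (c1 := sqrt (m1*m2/(m1+m2))) in *. set (c2 := sqrt (m3*(m1+m2))) in *.
  destruct (Kx X) as [k1 k2 k3]. unfold vdot, vscale; simpl.
  transitivity ((c1*c1)*(c2*c2)*(k1*k1+k2*k2+k3*k3)); [ring|].
  rewrite C1, C2. field. lra.
Qed.

Lemma maxarea_jac m1 m2 m3 X : masses_ok m1 m2 m3 -> is_mtri m1 m2 m3 X -> max_area m1 m2 m3 X ->
  vdot (jac1 m1 m2 m3 X) (jac2 m1 m2 m3 X) = 0 /\
  vdot (jac1 m1 m2 m3 X) (jac1 m1 m2 m3 X) = vdot (jac2 m1 m2 m3 X) (jac2 m1 m2 m3 X).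
Proof.
  intros hm hX hmax.
  pose proof (jac_inertia _ _ _ _ hm hX) as HI.
  pose proof (cross_jac_sq _ _ _ X hm) as HC. rewrite lagrange in HC.
  set (I0 := inertia m1 m2 m3 X) in *.
  pose proof (vdot_self_ge0 (jac1 m1 m2 m3 X)).
  pose proof (vdot_self_ge0 (jac2 m1 m2 m3 X)).
  set (ee := vdot (jac1 m1 m2 m3 X) (jac1 m1 m2 m3 X)) in *.
  set (ff := vdot (jac2 m1 m2 m3 X) (jac2 m1 m2 m3 X)) in *.
  set (ef := vdot (jac1 m1 m2 m3 X) (jac2 m1 m2 m3 X)) in *.
  destruct hm as (H1&H2&H3&H4).
  assert (I0ge : 0 <= I0) by lra.
  set (M := m1 + m2).
  set (al := sqrt (I0*M/(2*m1*m2))).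
  set (be := sqrt (I0/(2*m3*M))).
  assert (Ea : al*al = I0*M/(2*m1*m2)).
  { apply sqrt_sqrt. unfold M. apply Rmult_le_pos; [nra| apply Rlt_le, Rinv_0_lt_compat; nra]. }
  assert (Eb : be*be = I0/(2*m3*M)).
  { apply sqrt_sqrt. unfold M. apply Rmult_le_pos; [nra| apply Rlt_le, Rinv_0_lt_compat; nra]. }
  set (Y := (mkV3 (-m2*al/M) (-m3*be) 0, mkV3 (m1*al/M) (-m3*be) 0, mkV3 0 (M*be) 0) : tri).
  assert (HY : is_mtri m1 m2 m3 Y).
  { unfold Y, is_mtri, vadd, vscale, vzero, p1, p2, p3; simpl. unfold M in *. f_equal; field; lra. }
  assert (HIY : inertia m1 m2 m3 Y = I0).
  { transitivity (m1*m2/M*(al*al) + m3*M*(be*be)).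
    - unfold Y, inertia, vdot, p1, p2, p3; simpl. unfold M in *.
      replace m3 with (1 - m1 - m2) by lra. field. lra.
    - rewrite Ea, Eb. unfold M. field. lra. }
  assert (HKY : vdot (Kx Y) (Kx Y) = (al*al)*(be*be)).
  { unfold Y, Kx, vcross, vdot, vsub, vadd, vscale, p1, p2, p3; simpl. unfold M in *.
    replace m3 with (1 - m1 - m2) by lra. field. lra. }
  pose proof (hmax Y HY HIY) as Hle.
  assert (Hsq : area Y * area Y <= area X * area X).
  { pose proof (area_ge0 Y). apply Rmult_le_compat; lra. }
  rewrite !area_sq, HKY, Ea, Eb in Hsq.
  assert (HK : I0*I0 <= 4 * (m1*m2*m3 * vdot (Kx X) (Kx X))).
  { assert (Hp : 0 < m1*m2*m3) by (apply Rmult_lt_0_compat; nra).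
    apply (Rmult_le_reg_r (/ (4 * (m1*m2*m3)))). apply Rinv_0_lt_compat; lra.
    replace (I0 * I0 * / (4 * (m1 * m2 * m3))) with ((I0 * M / (2 * m1 * m2) * (I0 / (2 * m3 * M)))).
    2:{ unfold M; field; repeat split; lra. }
    replace (4 * (m1 * m2 * m3 * vdot (Kx X) (Kx X)) * / (4 * (m1 * m2 * m3))) with (vdot (Kx X) (Kx X)).
    2:{ field; repeat split; lra. }
    lra. }
  rewrite <- HC in HK. rewrite HI in HK.
  assert (Hz : (ee - ff)*(ee-ff) + 4*(ef*ef) <= 0) by nra.
  pose proof (Rle_0_sqr ef) as S1. pose proof (Rle_0_sqr (ee-ff)) as S2. unfold Rsqr in S1, S2.
  assert (A1 : ef*ef = 0) by lra. assert (A2 : (ee-ff)*(ee-ff) = 0) by lra.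
  split.
  - destruct (Rmult_integral _ _ A1); lra.
  - destruct (Rmult_integral _ _ A2); lra.
Qed.
Lemma acos_double c : 0 <= c <= 1 -> acos (2*c*c - 1) = 2 * acos c.
Proof.
  intros Hc. pose proof (acos_bound c) as Hb.
  assert (Hh : acos c <= PI/2).
  { destruct (Rle_or_lt (acos c) (PI/2)) as [h|h]; auto.
    pose proof (cos_decreasing_1 (PI/2) (acos c)) as D.
    rewrite cos_PI2, cos_acos in D by lra. pose proof PI_RGT_0. lra. }
  rewrite <- (cos_acos c) at 1 2 by lra.
  rewrite <- cos_2a_cos. apply acos_cos. lra.
Qed.

Lemma cos_periodZ x k : cos (x + 2 * IZR k * PI) = cos x.
Proof.
  destruct (Z.le_gt_cases 0 k) as [h|h].
  - rewrite <- (Z2Nat.id k h). rewrite <- INR_IZR_INZ. apply cos_period.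
  - assert (E : k = (- Z.of_nat (Z.to_nat (- k)))%Z) by (rewrite Z2Nat.id; lia).
    rewrite E, opp_IZR, <- INR_IZR_INZ.
    rewrite <- (cos_period (x + 2 * - INR (Z.to_nat (- k)) * PI) (Z.to_nat (-k))).
    f_equal. ring.
Qed.

Lemma acos_cos_mod x : exists k : Z, acos (cos x) = Rabs (x + 2 * IZR k * PI).
Proof.
  pose proof PI_RGT_0 as Hpi.
  set (z := (x + PI) / (2*PI)).
  destruct (archimed z) as [Ha Hb].
  exists (- (up z - 1))%Z.
  assert (Ek : IZR (- (up z - 1)) = - (IZR (up z) - 1)) by (rewrite opp_IZR, minus_IZR; reflexivity).
  rewrite <- (cos_periodZ x (- (up z - 1))%Z).
  rewrite Ek.
  set (n := IZR (up z)) in *.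
  assert (L1 : (n - 1) * (2*PI) <= x + PI).
  { assert (H : n - 1 <= z) by lra. unfold z in H.
    apply (Rmult_le_compat_r (2*PI)) in H; [|lra].
    replace ((x + PI) / (2 * PI) * (2 * PI)) with (x + PI) in H by (field; lra). lra. }
  assert (L2 : x + PI < n * (2*PI)).
  { assert (H : z < n) by lra. unfold z in H.
    apply (Rmult_lt_compat_r (2*PI)) in H; [|lra].
    replace ((x + PI) / (2 * PI) * (2 * PI)) with (x + PI) in H by (field; lra). lra. }
  set (y := x + 2 * - (n - 1) * PI).
  assert (Hy : - PI <= y < PI) by (unfold y; nra).
  destruct (Rle_or_lt 0 y) as [h|h].
  - rewrite Rabs_pos_eq by lra. apply acos_cos. lra.
  - rewrite Rabs_left by lra. rewrite <- cos_neg. apply acos_cos. lra.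
Qed.

Lemma vdot_zero u : vdot u u = 0 -> u = vzero.
Proof.
  destruct u as [a b c]; unfold vdot, vzero; simpl; intros H.
  assert (a*a = 0) by nra. assert (b*b = 0) by nra. assert (c*c = 0) by nra.
  f_equal; nra.
Qed.

Lemma inertia_pos m1 m2 m3 X : masses_ok m1 m2 m3 -> nonzero_tri X -> 0 < inertia m1 m2 m3 X.
Proof.
  intros (H1&H2&H3&H4) hnz. unfold inertia.
  pose proof (vdot_self_ge0 (p1 X)). pose proof (vdot_self_ge0 (p2 X)). pose proof (vdot_self_ge0 (p3 X)).
  destruct (Rle_or_lt (m1 * vdot (p1 X) (p1 X) + m2 * vdot (p2 X) (p2 X) + m3 * vdot (p3 X) (p3 X)) 0) as [h|h]; auto.
  exfalso. apply hnz.
  assert (vdot (p1 X) (p1 X) = 0) by nra. assert (vdot (p2 X) (p2 X) = 0) by nra. assert (vdot (p3 X) (p3 X) = 0) by nra.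
  destruct X as [[a b] c]. unfold p1, p2, p3 in *; simpl in *. f_equal; [f_equal|]; apply vdot_zero; auto.
Qed.

Lemma line_jac m1 m2 m3 X u : on_line u X ->
  exists s t, jac1 m1 m2 m3 X = vscale s u /\ jac2 m1 m2 m3 X = vscale t u.
Proof.
  intros (t1 & t2 & t3 & E1 & E2 & E3).
  exists (sqrt (m1 * m2 / (m1 + m2)) * (t2 - t1)),
    (sqrt (m3 * (m1 + m2)) * (t3 - / (m1+m2) * (m1*t1 + m2*t2))).
  unfold jac1, jac2. rewrite E1, E2, E3. destruct u.
  unfold vscale, vsub, vadd; simpl. split; f_equal; ring.
Qed.

Lemma vdot_sc a b u v : vdot (vscale a u) (vscale b v) = a*b*vdot u v.
Proof. destruct u, v; unfold vdot, vscale; simpl; ring. Qed.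

Lemma vdot_lin a b c d e f : vdot (vadd (vscale a e) (vscale b f)) (vadd (vscale c e) (vscale d f))
  = a*c*vdot e e + (a*d+b*c)*vdot e f + b*d*vdot f f.
Proof. destruct e, f; unfold vdot, vscale, vadd; simpl; ring. Qed.

Lemma vcross_lin s t e f u : vadd (vcross e (vscale s u)) (vcross f (vscale t u)) =
  vcross (vadd (vscale s e) (vscale t f)) u.
Proof. destruct e, f, u; unfold vcross, vscale, vadd; simpl; f_equal; ring. Qed.

Lemma par W u : vcross W u = vzero -> 0 < vdot W W -> u = vscale (vdot u W / vdot W W) W.
Proof.
  destruct W as [a b c], u as [x y z]; unfold vcross, vdot, vzero, vscale; simpl.
  intros H Hp. injection H; intros h3 h2 h1.
  pose proof (f_equal (Rmult a) h1). pose proof (f_equal (Rmult b) h1).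
  pose proof (f_equal (Rmult c) h1).
  pose proof (f_equal (Rmult a) h2). pose proof (f_equal (Rmult b) h2).
  pose proof (f_equal (Rmult c) h2).
  pose proof (f_equal (Rmult a) h3). pose proof (f_equal (Rmult b) h3).
  pose proof (f_equal (Rmult c) h3).
  f_equal; apply (Rmult_eq_reg_r (a*a+b*b+c*c)); try lra;
  field_simplify; try lra.
Qed.

Lemma shape_line m1 m2 m3 X u s t : masses_ok m1 m2 m3 -> is_mtri m1 m2 m3 X -> nonzero_tri X ->
  jac1 m1 m2 m3 X = vscale s u -> jac2 m1 m2 m3 X = vscale t u ->
  0 < s*s + t*t /\
  shape m1 m2 m3 X = mkV3 ((s*s - t*t)/(s*s+t*t)) (2*s*t/(s*s+t*t)) 0.
Proof.
  intros hm hX hnz J1 J2.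
  pose proof (inertia_pos _ _ _ _ hm hnz) as HP.
  pose proof (jac_inertia _ _ _ _ hm hX) as HI.
  rewrite J1, J2, !vdot_sc in HI.
  pose proof (vdot_self_ge0 u) as Hu.
  assert (HN : 0 < s*s+t*t).
  { destruct (Rle_or_lt (s*s+t*t) 0) as [h|h]; auto. nra. }
  assert (HU : 0 < vdot u u).
  { destruct (Rle_or_lt (vdot u u) 0) as [h|h]; auto. nra. }
  split; auto.
  unfold shape. cbv zeta. rewrite HI, J1, J2, !vdot_sc.
  assert (Hc : vcross (vscale s u) (vscale t u) = vzero).
  { destruct u; unfold vcross, vscale, vzero; simpl; f_equal; ring. }
  assert (Hn : vnorm vzero = 0).
  { unfold vnorm, vdot, vzero; simpl. replace (0*0+0*0+0*0) with 0 by ring. apply sqrt_0. }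
  rewrite Hc, Hn.
  unfold vscale; simpl. f_equal; field; lra.
Qed.

Lemma longitude_cs m1 m2 m3 X s t th : 
  shape m1 m2 m3 X = mkV3 ((s*s - t*t)/(s*s+t*t)) (2*s*t/(s*s+t*t)) 0 ->
  longitude m1 m2 m3 X th -> cos th = (s*s - t*t)/(s*s+t*t) /\ sin th = 2*s*t/(s*s+t*t).
Proof.
  intros S (phi & Hphi & Hs). cbv zeta in Hs. rewrite S in Hs. injection Hs; intros h3 h2 h1.
  pose proof (sin2_cos2 phi) as P. unfold Rsqr in P.
  pose proof (sin_ge_0 phi ltac:(lra) ltac:(lra)).
  assert (sin phi = 1) by nra.
  rewrite H0 in h1, h2. split; lra.
Qed.

Theorem mainTheorem8 (m1 m2 m3 : R) (d0 d1 d2 : tri)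
  (hm : masses_ok m1 m2 m3)
  (h0 : is_mtri m1 m2 m3 d0) (h0nz : nonzero_tri d0)
  (h0max : max_area m1 m2 m3 d0)
  (h1 : is_mtri m1 m2 m3 d1) (h1c : collinear d1) (h1nz : nonzero_tri d1)
  (h2 : is_mtri m1 m2 m3 d2) (h2c : collinear d2) (h2nz : nonzero_tri d2)
  (h01 : mcross m1 m2 m3 d0 d1 = vzero)
  (h02 : mcross m1 m2 m3 d0 d2 = vzero) :
  forall (u1 u2 : V3) (theta1 theta2 : R),
    u1 <> vzero -> on_line u1 d1 ->
    u2 <> vzero -> on_line u2 d2 ->
    longitude m1 m2 m3 d1 theta1 -> longitude m1 m2 m3 d2 theta2 ->
    line_angle u1 u2 = shape_dist m1 m2 m3 d1 d2 /\
    exists k : Z, line_angle u1 u2 = / 2 * Rabs (theta2 - theta1 + 2 * IZR k * PI).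
Proof.
  intros u1 u2 th1 th2 hu1 hl1 hu2 hl2 hlo1 hlo2.
  destruct (maxarea_jac _ _ _ _ hm h0 h0max) as [Hef Hee].
  pose proof (inertia_pos _ _ _ _ hm h0nz) as HP0.
  rewrite (jac_inertia _ _ _ _ hm h0) in HP0.
  set (e := jac1 m1 m2 m3 d0) in *. set (f := jac2 m1 m2 m3 d0) in *.
  set (E := vdot e e) in *.
  assert (HE : 0 < E) by lra.
  destruct (line_jac m1 m2 m3 _ _ hl1) as (s1 & t1 & J11 & J12).
  destruct (line_jac m1 m2 m3 _ _ hl2) as (s2 & t2 & J21 & J22).
  destruct (shape_line _ _ _ _ _ _ _ hm h1 h1nz J11 J12) as [HN1 S1].
  destruct (shape_line _ _ _ _ _ _ _ hm h2 h2nz J21 J22) as [HN2 S2].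
  rewrite (jac_cross _ _ _ _ _ hm h0 h1), J11, J12, vcross_lin in h01.
  rewrite (jac_cross _ _ _ _ _ hm h0 h2), J21, J22, vcross_lin in h02.
  fold e f in h01, h02.
  set (W1 := vadd (vscale s1 e) (vscale t1 f)) in *.
  set (W2 := vadd (vscale s2 e) (vscale t2 f)) in *.
  assert (HW11 : vdot W1 W1 = (s1*s1+t1*t1)*E) by (unfold W1; rewrite vdot_lin, Hef, <- Hee; fold E; ring).
  assert (HW22 : vdot W2 W2 = (s2*s2+t2*t2)*E) by (unfold W2; rewrite vdot_lin, Hef, <- Hee; fold E; ring).
  assert (HW12 : vdot W1 W2 = (s1*s2+t1*t2)*E) by (unfold W1, W2; rewrite vdot_lin, Hef, <- Hee; fold E; ring).
  assert (P1 := par _ _ h01 ltac:(rewrite HW11; nra)).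
  assert (P2 := par _ _ h02 ltac:(rewrite HW22; nra)).
  set (l1 := vdot u1 W1 / vdot W1 W1) in *. set (l2 := vdot u2 W2 / vdot W2 W2) in *.
  assert (Hl1 : l1 <> 0).
  { intro Z. apply hu1. rewrite P1, Z. destruct W1; unfold vscale, vzero; simpl; f_equal; ring. }
  assert (Hl2 : l2 <> 0).
  { intro Z. apply hu2. rewrite P2, Z. destruct W2; unfold vscale, vzero; simpl; f_equal; ring. }
  set (N1 := s1*s1+t1*t1) in *. set (N2 := s2*s2+t2*t2) in *.
  set (D := s1*s2+t1*t2) in *.
  assert (Ha : vdot u1 u1 = l1*l1*(N1*E)) by (rewrite P1, vdot_sc, HW11; ring).
  assert (Hb : vdot u2 u2 = l2*l2*(N2*E)) by (rewrite P2, vdot_sc, HW22; ring).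
  assert (Hab : vdot u1 u2 = l1*l2*(D*E)) by (rewrite P1, P2, vdot_sc, HW12; ring).
  assert (Hapos : 0 < vdot u1 u1) by (rewrite Ha; apply Rmult_lt_0_compat; [nra|nra]).
  assert (Hbpos : 0 < vdot u2 u2) by (rewrite Hb; apply Rmult_lt_0_compat; [nra|nra]).
  unfold line_angle, vnorm.
  set (c := Rabs (vdot u1 u2) / (sqrt (vdot u1 u1) * sqrt (vdot u2 u2))).
  assert (Hc0 : 0 <= c).
  { unfold c. apply Rmult_le_pos; [apply Rabs_pos|].
    apply Rlt_le, Rinv_0_lt_compat, Rmult_lt_0_compat; apply sqrt_lt_R0; auto. }
  assert (Hcc : c*c = D*D/(N1*N2)).
  { unfold c.
    assert (R1 : Rabs (vdot u1 u2) * Rabs (vdot u1 u2) = vdot u1 u2 * vdot u1 u2).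
    { rewrite <- Rabs_mult. apply Rabs_pos_eq. nra. }
    pose proof (sqrt_sqrt _ (Rlt_le _ _ Hapos)). pose proof (sqrt_sqrt _ (Rlt_le _ _ Hbpos)).
    pose proof (sqrt_lt_R0 _ Hapos). pose proof (sqrt_lt_R0 _ Hbpos).
    transitivity ((Rabs (vdot u1 u2) * Rabs (vdot u1 u2)) / ((sqrt (vdot u1 u1) * sqrt (vdot u1 u1)) * (sqrt (vdot u2 u2) * sqrt (vdot u2 u2)))).
    { field. split; lra. }
    rewrite R1, H, H0, Ha, Hb, Hab. field. repeat split; lra. }
  assert (Hc1 : c <= 1).
  { assert (D*D <= N1*N2) by (unfold D, N1, N2; pose proof (Rle_0_sqr (s1*t2 - t1*s2)) as Q; unfold Rsqr in Q; nra).
    assert (c*c <= 1).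
    { rewrite Hcc. apply (Rmult_le_reg_r (N1*N2)). nra.
      unfold Rdiv. rewrite Rmult_assoc, Rinv_l by nra. lra. }
    nra. }
  assert (Hdot : vdot (shape m1 m2 m3 d1) (shape m1 m2 m3 d2) = 2*c*c - 1).
  { replace (2*c*c-1) with (2*(c*c)-1) by ring. rewrite S1, S2, Hcc. unfold vdot; simpl. fold N1 N2. unfold N1, N2, D in *. field. split; lra. }
  split.
  - unfold shape_dist. rewrite Hdot, acos_double by lra. field.
  - destruct (longitude_cs _ _ _ _ _ _ _ S1 hlo1) as [C1 Sn1].
    destruct (longitude_cs _ _ _ _ _ _ _ S2 hlo2) as [C2 Sn2].
    assert (Hcos : cos (th2 - th1) = 2*c*c - 1).
    { rewrite cos_minus, C1, C2, Sn1, Sn2, <- Hdot, S1, S2. unfold vdot; simpl. fold N1 N2. ring. }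
    destruct (acos_cos_mod (th2 - th1)) as [k Hk].
    exists k. rewrite <- Hk, Hcos, acos_double by lra. field.
Qed.
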